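(* Let $0\le N\le M-1$, let $x=(x_1<\dots<x_N)$ and $y=(y_1<\dots<y_{N+1})$ be subsets of $\{1,\dots,M\}$, and likewise $\overline{x}=(\overline{x_1}<\dots<\overline{x_N})$, $\overline{y}=(\overline{y_1}<\dots<\overline{y_{N+1}})$. Then \begin{align*} \langle y_1\cdots y_{N+1}|B(u)|x_1\cdots x_N\rangle&=G_{y,x}(u),& \langle\overline{x_1}\cdots\overline{x_N}|B(u)|\overline{y_1}\cdots\overline{y_{N+1}}\rangle&=H_{\overline{y},\overline{x}}(u),\\ \langle x_1\cdots x_N|C(u)|y_1\cdots y_{N+1}\rangle&=\overline{G}_{y,x}(u),& \langle\overline{y_1}\cdots\overline{y_{N+1}}|C(u)|\overline{x_1}\cdots\overline{x_N}\rangle&=\overline{H}_{\overline{y},\overline{x}}(u). \end{align*}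
   Context: Fix complex parameters $t,a,b,c,d,e,f$, all nonzero, with $t\neq1$, satisfying $cd+af=0$ and $tcd+be=0$. The $L$-operator $L_{aj}(u)$ on $W_a\otimes V_j$ ($\cong\mathbb{C}^2\otimes\mathbb{C}^2$, basis $|0\rangle,|1\rangle$) has matrix elements $[L(u)]^{\gamma\delta}_{\alpha\beta}={}_a\langle\gamma|{}_j\langle\delta|L_{aj}(u)|\alpha\rangle_a|\beta\rangle_j$: $[L]^{00}_{00}=au+b$, $[L]^{01}_{01}=atu+b$, $[L]^{01}_{10}=(1-t)cu$, $[L]^{10}_{01}=(1-t)d$, $[L]^{10}_{10}=eu+f$, $[L]^{11}_{11}=eu+tf$, all others $0$. Monodromy $T_a(u)=L_{aM}(u)\cdots L_{a1}(u)$, $B(u)={}_a\langle0|T_a(u)|1\rangle_a$, $C(u)={}_a\langle1|T_a(u)|0\rangle_a$, acting on $V_1\otimes\cdots\otimes V_M$. $|x_1\cdots x_N\rangle$ is the basis tensor with $|1\rangle$ at sites $x_j$ and $|0\rangle$ elsewhere; $|\overline{x_1}\cdots\overline{x_N}\rangle$ is the basis tensor with $|0\rangle$ at sites $\overline{x_j}$ and $|1\rangle$ elsewhere; bras are duals. For strictly increasing $y=(y_1<\dots<y_{N+1})$, $x=(x_1<\dots<x_N)$ write $y\succ x$ if $y_1\le x_1\le y_2\le x_2\le\cdots\le x_N\le y_{N+1}$. For $y\succ x$, let $p_1<\dots<p_{k+1}$ be the $y_j$ ($1\le j\le N+1$) with $y_j\notin\{x_j,x_{j-1}\}$ (ignoring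 undefined $x_0,x_{N+1}$), let $q_1<\dots<q_k$ be the $x_j$ with $x_j\notin\{y_j,y_{j+1}\}$, and set $q_0=0$, $q_{k+1}=M+1$. For integers $\alpha<\beta$ put $n_x(\alpha,\beta)=\#\{\ell:\alpha<x_\ell<\beta\}$. Define $G_{y,x}(u)=((1-t)cu)^{k+1}((1-t)d)^k\prod_{j=1}^{k+1}(atu+b)^{n_x(p_j,q_j)}(au+b)^{q_j-p_j-1-n_x(p_j,q_j)}(eu+tf)^{n_x(q_{j-1},p_j)}(eu+f)^{p_j-q_{j-1}-1-n_x(q_{j-1},p_j)}$, $\overline{G}_{y,x}(u)=((1-t)d)^{k+1}((1-t)cu)^k\prod_{j=1}^{k+1}(eu+tf)^{n_x(p_j,q_j)}(eu+f)^{q_j-p_j-1-n_x(p_j,q_j)}(atu+b)^{n_x(q_{j-1},p_j)}(au+b)^{p_j-q_{j-1}-1-n_x(q_{j-1},p_j)}$, and $G_{y,x}(u)=\overline{G}_{y,x}(u)=0$ if not $y\succ x$. For hole sequences $\overline{y},\overline{x}$, with $\overline{y}\succ\overline{x}$, $\overline{p_j},\overline{q_j}$ and $n_{\overline{x}}$ defined in the same way from $\overline{y},\overline{x}$ ($\overline{q_0}=0$, $\overline{q_{k+1}}=M+1$), define $H_{\overline{y},\overline{x}}(u)=((1-t)cu)^{k+1}((1-t)d)^k\prod_{j=1}^{k+1}(au+b)^{n_{\overline{x}}(\overline{p_j},\overline{q_j})}(atu+b)^{\overline{q_j}-\overline{p_j}-1-n_{\overline{x}}(\overline{p_j},\overline{q_j})}(eu+f)^{n_{\overline{x}}(\overline{q_{j-1}},\overline{p_j})}(eu+tf)^{\overline{p_j}-\overline{q_{j-1}}-1-n_{\overline{x}}(\overline{q_{j-1}},\overline{p_j})}$,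 $\overline{H}_{\overline{y},\overline{x}}(u)=((1-t)d)^{k+1}((1-t)cu)^k\prod_{j=1}^{k+1}(eu+f)^{n_{\overline{x}}(\overline{p_j},\overline{q_j})}(eu+tf)^{\overline{q_j}-\overline{p_j}-1-n_{\overline{x}}(\overline{p_j},\overline{q_j})}(au+b)^{n_{\overline{x}}(\overline{q_{j-1}},\overline{p_j})}(atu+b)^{\overline{p_j}-\overline{q_{j-1}}-1-n_{\overline{x}}(\overline{q_{j-1}},\overline{p_j})}$, and both are $0$ if not $\overline{y}\succ\overline{x}$. *)

(* Defs.v *)
From HB Require Import structures.
From mathcomp Require Import all_boot all_order all_algebra.
Set Implicit Arguments. Unset Strict Implicit. Unset Printing Implicit Defensive.
Import Order.TTheory GRing.Theory Num.Theory.
Local Open Scope ring_scope.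

Section Defs.
Variable R : fieldType.
Variables (t a b c d e f : R).

(* [L(u)]^{gam del}_{alp bet} : alp = auxiliary input, bet = site input,
   gam = auxiliary output, del = site output; false = |0>, true = |1>. *)
Definition Lel (u : R) (gam del alp bet : bool) : R :=
  match alp, bet, gam, del with
  | false, false, false, false => a * u + b
  | false, true,  false, true  => a * t * u + b
  | true,  false, false, true  => (1 - t) * c * u
  | false, true,  true,  false => (1 - t) * d
  | true,  false, true,  false => e * u + f
  | true,  true,  true,  true  => e * u + t * f
  | _, _, _, _ => 0
  end.

(* Matrix element  <aout|_a <out| L_{ak}(u) ... L_{a1}(u) |ain>_a |inn>
   of the partial monodromy on sites 1..k, in the tensor-product basis;
   a configuration is given by its occupation function (site i carries |1>
   iff occ i = true).  This is the literal unfolding of the operator product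
   T^{(k+1)} = L_{a,k+1} T^{(k)} in the basis. *)
Fixpoint mono (u : R) (k : nat) (aout ain : bool) (out inn : nat -> bool) : R :=
  match k with
  | 0 => if aout == ain then 1 else 0
  | k'.+1 => \sum_(s : bool)
              Lel u aout (out k'.+1) s (inn k'.+1) * mono u k' s ain out inn
  end.

Definition Bel (u : R) (M : nat) (out inn : nat -> bool) : R := mono u M false true out inn.
Definition Cel (u : R) (M : nat) (out inn : nat -> bool) : R := mono u M true false out inn.

End Defs.

(* basis tensors: |x_1...x_N> has |1> exactly at the sites in x;
   |bar x_1 ... bar x_N> has |0> exactly at the sites in x. *)
Definition part_occ (x : seq nat) : nat -> bool := fun i => i \in x.
Definition hole_occ (x : seq nat) : nat -> bool := fun i => i \notin x.

(* y \succ x  (0-based indices: y_0 <= x_0 <= y_1 <= ... <= x_{N-1} <= y_N) *)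
Definition interlace (y x : seq nat) : bool :=
  (size y == (size x).+1) &&
  all (fun i => (nth 0 y i <= nth 0 x i <= nth 0 y i.+1)%N) (iota 0 (size x)).

Definition pseq (y x : seq nat) : seq nat :=
  [seq nth 0 y i | i <- iota 0 (size y) &
     ~~ ((i < size x)%N && (nth 0 y i == nth 0 x i)) &&
     ~~ ((0 < i)%N && (nth 0 y i == nth 0 x i.-1))].

Definition qseq (y x : seq nat) : seq nat :=
  [seq nth 0 x i | i <- iota 0 (size x) &
     (nth 0 x i != nth 0 y i) && (nth 0 x i != nth 0 y i.+1)].

Definition nx (x : seq nat) (al be : nat) : nat := count (fun z => (al < z < be)%N) x.

Section Gdefs.
Variable R : fieldType.

(* 1-based p_j, and q_j with q_0 = 0, q_{k+1} = M+1 *)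
Definition pj (y x : seq nat) (j : nat) : nat := nth 0 (pseq y x) j.-1.
Definition qj (M : nat) (y x : seq nat) (j : nat) : nat :=
  if j == 0%N then 0%N
  else if j == (size (qseq y x)).+1 then M.+1
  else nth 0 (qseq y x) j.-1.

Definition prodform (M : nat) (y x : seq nat) (A B C D : R) : R :=
  \prod_(1 <= j < (size (qseq y x)).+2)
    let p := pj y x j in let q := qj M y x j in let q' := qj M y x j.-1 in
    A ^+ nx x p q * B ^+ (q - p - 1 - nx x p q)%N *
    C ^+ nx x q' p * D ^+ (p - q' - 1 - nx x q' p)%N.

Variables (t a b c d e f : R).

Definition Gf (M : nat) (y x : seq nat) (u : R) : R :=
  if interlace y x then
    ((1 - t) * c * u) ^+ (size (qseq y x)).+1 * ((1 - t) * d) ^+ size (qseq y x) *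
    prodform M y x (a * t * u + b) (a * u + b) (e * u + t * f) (e * u + f)
  else 0.

Definition Gbarf (M : nat) (y x : seq nat) (u : R) : R :=
  if interlace y x then
    ((1 - t) * d) ^+ (size (qseq y x)).+1 * ((1 - t) * c * u) ^+ size (qseq y x) *
    prodform M y x (e * u + t * f) (e * u + f) (a * t * u + b) (a * u + b)
  else 0.

Definition Hf (M : nat) (yb xb : seq nat) (u : R) : R :=
  if interlace yb xb then
    ((1 - t) * c * u) ^+ (size (qseq yb xb)).+1 * ((1 - t) * d) ^+ size (qseq yb xb) *
    prodform M yb xb (a * u + b) (a * t * u + b) (e * u + f) (e * u + t * f)
  else 0.

Definition Hbarf (M : nat) (yb xb : seq nat) (u : R) : R :=
  if interlace yb xb then
    ((1 - t) * d) ^+ (size (qseq yb xb)).+1 * ((1 - t) * c * u) ^+ size (qseq yb xb) *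
    prodform M yb xb (e * u + f) (e * u + t * f) (a * u + b) (a * t * u + b)
  else 0.

End Gdefs.

Definition site_seq (M N : nat) (x : seq nat) : bool :=
  [&& size x == N, sorted ltn x & all (fun i => (0 < i <= M)%N) x].

(* Main.v *)
Require Import Defs.
From HB Require Import structures.
From mathcomp Require Import all_boot all_order all_algebra.
From mathcomp Require Import zify ring.
Import GRing.Theory.

Set Implicit Arguments. Unset Strict Implicit. Unset Printing Implicit Defensive.

Definition cnt (s : seq nat) (i : nat) : nat := count (fun v => v <= i) s.

Lemma cnt_all_gt s i : all (fun v => i < v) s -> cnt s i = 0.
Proof. elim: s => //= v s IH /andP[h1 h2]; rewrite /cnt /= leqNgt h1 /=; exact: IH. Qed.

Lemma cnt_nth s i j : sorted ltn s -> j < size s -> (nth 0 s j <= i) = (j < cnt s i).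
Proof.
elim: s j => // a s IH j /= hs hj.
have hall : all (ltn a) s := order_path_min ltn_trans hs.
have hs' : sorted ltn s := path_sorted hs.
rewrite /cnt /=; case: j hj => [|j] hj /=.
  case: (leqP a i) => //= hai; rewrite -/(cnt s i) cnt_all_gt //.
  by apply: sub_all hall => v /=; apply: ltn_trans.
rewrite IH //; case: (leqP a i) => //= hai.
rewrite -/(cnt s i) cnt_all_gt //; last by apply: sub_all hall => v /=; apply: ltn_trans.
Qed.

Lemma cnt_eq s i n : sorted ltn s -> n <= size s -> (0 < n -> nth 0 s n.-1 <= i) ->
  (n < size s -> i < nth 0 s n) -> cnt s i = n.
Proof.
move=> hs hn h1 h2; apply/eqP; rewrite eqn_leq; apply/andP; split.
  case: (ltnP n (size s)) => hn'.
    have := cnt_nth i hs hn'; have := h2 hn'; lia.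
  have := count_size (fun v => v <= i) s; rewrite /cnt; lia.
case: n hn h1 h2 => // n hn h1 _; have := cnt_nth i hs hn; rewrite h1 //.
Qed.

Lemma cnt_succ s i : uniq s -> cnt s i.+1 = cnt s i + (i.+1 \in s).
Proof.
move=> hu; rewrite -(count_uniq_mem _ hu) /cnt.
elim: s {hu} => //= v s ->; rewrite eq_sym; case: (ltngtP v i.+1) => h /=; lia.
Qed.

Lemma cnt0 s : all (fun v => 0 < v) s -> cnt s 0 = 0.
Proof. exact: cnt_all_gt. Qed.

Lemma cnt_full s M : all (fun v => v <= M) s -> cnt s M = size s.
Proof. by move=> h; apply/eqP; rewrite /cnt -all_count. Qed.

Lemma count_split (T : Type) (a p : pred T) s :
  count a s = count (fun v => a v && p v) s + count (fun v => a v && ~~ p v) s.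
Proof. elim: s => //= v s ->; case: (a v); case: (p v) => /=; lia. Qed.

Lemma count_sym (a : pred nat) s1 s2 : uniq s1 -> uniq s2 ->
  count (fun v => a v && (v \in s2)) s1 = count (fun v => a v && (v \in s1)) s2.
Proof.
move=> h1 h2.
have hp : perm_eq [seq v <- s1 | v \in s2] [seq v <- s2 | v \in s1].
  apply: uniq_perm; rewrite ?filter_uniq // => v; rewrite !mem_filter; lia.
have := (permP hp) a; rewrite !count_filter => e.
by rewrite (eq_count (a2 := predI a (mem s2))) // e.
Qed.

Lemma parity m : {j | m = j.*2} + {j | m = (j.*2).+1}.
Proof.
case h: (odd m); [right|left]; exists m./2; have := odd_double_half m; rewrite h /=; lia.
Qed.

Lemma mono_le (f : nat -> nat) n : (forall m, m < n -> f m < f m.+1) ->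
  forall a b, a <= b <= n -> f a <= f b.
Proof.
move=> hf a; elim=> [|b IH] /andP[hab hbn]; first by have -> : a = 0 by lia.
case: (ltngtP a b.+1) => h; try lia.
- have := IH (_ : a <= b <= n); have := hf b; lia.
- by rewrite h.
Qed.



Lemma interl_nth y x i : interlace y x -> i < size x ->
  nth 0 y i <= nth 0 x i <= nth 0 y i.+1.
Proof. by case/andP=> _ /allP h hi; apply: h; rewrite mem_iota. Qed.

Lemma interl_size y x : interlace y x -> size y = (size x).+1.
Proof. by case/andP=> /eqP. Qed.

Lemma snth s i j : sorted ltn s -> i < j -> j < size s -> nth 0 s i < nth 0 s j.
Proof. move=> hs hij hj; apply: (sorted_ltn_nth ltn_trans) => //; rewrite inE; lia. Qed.

Lemma pseq_filter y x : sorted ltn x -> sorted ltn y -> interlace y x ->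
  pseq y x = [seq v <- y | v \notin x].
Proof.
move=> hx hy hI; have hs := interl_size hI.
rewrite /pseq; transitivity [seq v <- mkseq (nth 0 y) (size y) | v \notin x]; last by rewrite mkseq_nth.
rewrite /mkseq filter_map; congr map.
apply: eq_in_filter => i; rewrite mem_iota /= => hi; move: i hi => /= i hi.
rewrite -negb_or; congr negb; apply/idP/idP.
  case/orP=> /andP[h1 /eqP ->]; apply: mem_nth => //=; lia.
case/(nthP 0)=> l hl hle.
case: (ltngtP l i) => hli.
- case: (ltnP l.+1 i) => hli2.
    have hi1 : i.-1 < size x by lia.
    have h1 := interl_nth hI hi1.
    have hl1 : l < i.-1 by lia.
    have h2 := snth hx hl1 hi1.
    have e : i.-1.+1 = i by lia.
    rewrite e in h1; exfalso; move: h1 h2 hle => /=; lia.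
  apply/orP; right; apply/andP; split; first lia.
  have el : l = i.-1 by lia.
  by apply/eqP => /=; rewrite -el hle.
- have hix : i < size x by move: hl hli => /=; lia.
  have h1 := interl_nth hI hix.
  have h2 := snth hx hli hl; exfalso; move: h1 h2 hle => /=; lia.
- by subst; apply/orP; left; apply/andP; split => //; apply/eqP => /=; rewrite hle.
Qed.

Lemma qseq_filter y x : sorted ltn x -> sorted ltn y -> interlace y x ->
  qseq y x = [seq v <- x | v \notin y].
Proof.
move=> hx hy hI; have hs := interl_size hI.
rewrite /qseq; transitivity [seq v <- mkseq (nth 0 x) (size x) | v \notin y]; last by rewrite mkseq_nth.
rewrite /mkseq filter_map; congr map.
apply: eq_in_filter => i; rewrite mem_iota /= => hi; move: i hi => /= i hi.
have hix : i < size x by move: hi => /=; lia.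
have hI' := interl_nth hI hix.
apply/idP/idP.
  case/andP=> h1 h2; apply/negP; case/(nthP 0)=> l hl hle.
  move: h1 h2 hle; rewrite /= => h1 h2 hle.
  case: (ltngtP l i) => hli.
  - have hiy : i < size y by lia.
    have := snth hy hli hiy; move: hI' hle => /=; lia.
  - case: (ltngtP l i.+1) => hli2.
    + lia.
    + have := snth hy hli2 hl; move: hI' hle => /=; lia.
    + by subst; rewrite hle eqxx in h2.
  - by subst; rewrite hle eqxx in h1.
move=> hn; apply/andP; split; apply/negP => /eqP e; move: hn; rewrite e mem_nth //=; lia.
Qed.

Lemma interl_V y x i : sorted ltn x -> sorted ltn y -> interlace y x ->
  cnt x i <= cnt y i <= (cnt x i).+1.
Proof.
move=> hx hy hI; have hs := interl_size hI.
have hm : cnt x i <= size x := count_size _ _.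
have hmy : cnt y i <= size y := count_size _ _.
apply/andP; split.
  case e: (cnt x i) => [|n] //.
  have hn : n < size x by lia.
  have h1 := cnt_nth i hx hn; rewrite e ltnSn in h1.
  have h2 := interl_nth hI hn.
  have hny : n < size y by lia.
  have h3 := cnt_nth i hy hny.
  move: h1 h2 h3 => /=; lia.
case: (ltnP (cnt x i) (size x)) => hm'.
  have h1 := cnt_nth i hx hm'; rewrite ltnn in h1.
  have h2 := interl_nth hI hm'.
  have hny : (cnt x i).+1 < size y by lia.
  have h3 := cnt_nth i hy hny.
  move: h1 h2 h3 => /=; lia.
lia.
Qed.

Lemma V_interl M y x : sorted ltn x -> sorted ltn y -> size y = (size x).+1 ->
  all (fun v => v <= M) x -> all (fun v => v <= M) y ->
  (forall i, i <= M -> cnt x i <= cnt y i <= (cnt x i).+1) -> interlace y x.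
Proof.
move=> hx hy hs hxM hyM hV; rewrite /interlace hs eqxx /=.
apply/allP => i; rewrite mem_iota /= => hi; move: i hi => /= i hi.
have hix : i < size x by move: hi => /=; lia.
have hiy : i < size y by lia.
have hiy1 : i.+1 < size y by lia.
have hxi : nth 0 x i <= M by apply: (allP hxM); apply: mem_nth.
have hyi : nth 0 y i.+1 <= M by apply: (allP hyM); apply: mem_nth.
apply/andP; split.
  rewrite leqNgt; apply/negP => h.
  have h1 := hV _ hxi; have h2 := cnt_nth (nth 0 x i) hx hix; rewrite leqnn in h2.
  have h3 := cnt_nth (nth 0 x i) hy hiy; move: h h1 h2 h3 => /=; lia.
rewrite leqNgt; apply/negP => h.
have h1 := hV _ hyi; have h2 := cnt_nth (nth 0 y i.+1) hy hiy1; rewrite leqnn in h2.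
have h3 := cnt_nth (nth 0 y i.+1) hx hix; move: h h1 h2 h3 => /=; lia.
Qed.

Module CM.
Local Open Scope ring_scope.

Section Gen.
Variable R : fieldType.
Variable w : bool -> bool -> bool -> bool -> R.
Hypothesis hw : forall ep en bx by_ : bool, (ep + by_ != en + bx)%N -> w ep en bx by_ = 0.

Fixpoint gmono (X Y : nat -> bool) (k : nat) (eo ei : bool) : R :=
  match k with
  | 0 => if eo == ei then 1 else 0
  | k'.+1 => \sum_(s : bool) w s eo (X k'.+1) (Y k'.+1) * gmono X Y k' s ei
  end.

Definition ev x y i := (cnt x i < cnt y i)%N.
Definition condV x y i := (cnt x i <= cnt y i <= (cnt x i).+1)%N.
Definition Vk x y k := all (condV x y) (iota 0 k.+1).
Definition Fw x y i := w (ev x y i.-1) (ev x y i) (i \in x) (i \in y).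

Lemma gmono_path (x y : seq nat) k eo : uniq x -> uniq y -> all (fun v => 0 < v)%N x -> all (fun v => 0 < v)%N y ->
  gmono (fun i => i \in x) (fun i => i \in y) k eo false =
  if Vk x y k && (eo == ev x y k) then \prod_(1 <= i < k.+1) Fw x y i else 0.
Proof.
move=> ux uy px py; elim: k eo => [|k IH] eo.
  rewrite /= /Vk /= /condV /ev !cnt0 //= big_geq //.
have eV : Vk x y k.+1 = Vk x y k && condV x y k.+1.
  by rewrite /Vk -addn1 iotaD all_cat /= andbT.
rewrite /= big_bool /= !IH eV.
case hV: (Vk x y k) => /=; last by rewrite !mulr0 addr0.
have hc : condV x y k by move: hV; rewrite /Vk -addn1 iotaD all_cat /= andbT => /andP[_].
have key : (ev x y k + (k.+1 \in y) == eo + (k.+1 \in x))%N ->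
    condV x y k.+1 && (eo == ev x y k.+1).
  move: hc; rewrite /condV /ev !cnt_succ //.
  case: (k.+1 \in x); case: (k.+1 \in y); case: eo; case: ltnP => /= h1 h2 /eqP h3; rewrite eq_sym ?eqb_id ?eqbF_neg; lia.
have hz : condV x y k.+1 && (eo == ev x y k.+1) = false ->
    w (ev x y k) eo (k.+1 \in x) (k.+1 \in y) = 0.
  by move=> hk; apply: hw; apply/negP => /key; rewrite hk.
rewrite (@big_nat_recr _ _ _ k.+1 1) //=.
case hk: (condV x y k.+1 && (eo == ev x y k.+1)); last first.
  by have := hz hk; case e: (ev x y k) => /= hz'; rewrite hz' ?mul0r ?mulr0 ?addr0 ?add0r.
move/andP: hk => [_ /eqP ->].
by case e: (ev x y k) => /=; rewrite ?mulr0 ?addr0 ?add0r /Fw /= e mulrC.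
Qed.

End Gen.

End CM.
Import CM.
Module EM.
Local Open Scope ring_scope.

Lemma tele (R : comNzRingType) (F : nat -> R) (f : nat -> nat) n :
  (forall m, (m < n.+1)%N -> (f m < f m.+1)%N) ->
  \prod_((f 0%N).+1 <= i < f n.+1) F i =
  \prod_(0 <= m < n.+1) (\prod_((f m).+1 <= i < f m.+1) F i) * \prod_(1 <= m < n.+1) F (f m).
Proof.
elim: n => [|n IH] hf.
  by rewrite big_nat1 [X in _ * X]big_geq // mulr1.
have hm := mono_le hf.
have h2 : (f n.+1 <= f n.+2)%N by apply: hm; lia.
have h1 : ((f 0).+1 <= f n.+1)%N.
  have h3 : (f 1 <= f n.+1)%N by apply: hm; lia.
  have := hf 0%N isT; lia.
rewrite (big_cat_nat h1 h2) /=.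
rewrite (@big_ltn _ _ _ (f n.+1)) ?hf //.
rewrite IH; last by move=> m hmn; apply: hf; lia.
rewrite (@big_nat_recr _ _ _ n.+1) //= (@big_nat_recr _ _ _ n.+1) //=.
ring.
Qed.

Lemma pairing (R : comRingType) (G : nat -> R) n :
  \prod_(0 <= m < n.*2) G m = \prod_(0 <= j < n) (G j.*2 * G (j.*2).+1).
Proof.
elim: n => [|n IH]; first by rewrite !big_geq.
by rewrite doubleS !big_nat_recr //= IH mulrA.
Qed.

Lemma powodd (R : comRingType) (a b : R) n :
  \prod_(1 <= m < (n.+1).*2) (if odd m then a else b) = a ^+ n.+1 * b ^+ n.
Proof.
elim: n => [|n IH]; first by rewrite big_nat1 /= expr1 expr0 mulr1.
rewrite (doubleS n.+1) big_nat_recr // big_nat_recr // IH /= odd_double /= !exprS; ring.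
Qed.

Lemma prod_if_seq (R : comRingType) (A B : R) (p : pred nat) s :
  \prod_(i <- s) (if p i then A else B) = A ^+ count p s * B ^+ count (predC p) s.
Proof.
elim: s => [|v s IH]; first by rewrite big_nil !expr0 mulr1.
rewrite big_cons IH /=; case: (p v) => /=; rewrite ?add1n ?add0n exprS; ring.
Qed.

Lemma prod_if (R : comRingType) (A B : R) (x : seq nat) al be : uniq x -> (al < be)%N ->
  \prod_(al.+1 <= i < be) (if i \in x then A else B) =
  A ^+ nx x al be * B ^+ (be - al - 1 - nx x al be)%N.
Proof.
move=> ux hab; rewrite prod_if_seq.
have e1 : count (fun i => i \in x) (index_iota al.+1 be) = nx x al be.
  have := count_sym predT (iota_uniq al.+1 (be - al.+1)) ux.
  rewrite /nx /index_iota => e.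
  rewrite (eq_count (a2 := fun v => predT v && (v \in x))) // e.
  by apply: eq_count => v /=; rewrite mem_iota; congr andb; lia.
have e2 := count_predC (fun i => i \in x) (index_iota al.+1 be).
rewrite size_iota in e2.
rewrite e1 in e2 *; congr (_ * _ ^+ _); apply/eqP; rewrite -(eqn_add2l (nx x al be)) e2; apply/eqP; lia.
Qed.

End EM.
Import EM.

Section Comb.
Variables (M N : nat) (x y : seq nat).
Hypothesis hx : site_seq M N x.
Hypothesis hy : site_seq M N.+1 y.
Hypothesis hI : interlace y x.

Lemma sx : sorted ltn x. Proof. by case/and3P: hx. Qed.
Lemma sy : sorted ltn y. Proof. by case/and3P: hy. Qed.
Lemma szx : size x = N. Proof. by case/and3P: hx => /eqP. Qed.
Lemma szy : size y = N.+1. Proof. by case/and3P: hy => /eqP. Qed.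
Lemma ux : uniq x. Proof. exact: sorted_uniq ltn_trans ltnn _ sx. Qed.
Lemma uy : uniq y. Proof. exact: sorted_uniq ltn_trans ltnn _ sy. Qed.
Lemma rx v : v \in x -> 0 < v <= M. Proof. by case/and3P: hx => _ _ /allP h /h. Qed.
Lemma ry v : v \in y -> 0 < v <= M. Proof. by case/and3P: hy => _ _ /allP h /h. Qed.
Lemma px : all (fun v => 0 < v) x. Proof. by apply/allP => v /rx /andP[]. Qed.
Lemma py : all (fun v => 0 < v) y. Proof. by apply/allP => v /ry /andP[]. Qed.
Lemma mx : all (fun v => v <= M) x. Proof. by apply/allP => v /rx /andP[]. Qed.
Lemma my : all (fun v => v <= M) y. Proof. by apply/allP => v /ry /andP[]. Qed.

Definition P := [seq v <- y | v \notin x].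
Definition Q := [seq v <- x | v \notin y].
Lemma eP : pseq y x = P. Proof. exact: pseq_filter sx sy hI. Qed.
Lemma eQ : qseq y x = Q. Proof. exact: qseq_filter sx sy hI. Qed.
Lemma sP : sorted ltn P. Proof. apply: sorted_filter; [exact: ltn_trans | exact: sy]. Qed.
Lemma sQ : sorted ltn Q. Proof. apply: sorted_filter; [exact: ltn_trans | exact: sx]. Qed.
Lemma uP : uniq P. Proof. exact: sorted_uniq ltn_trans ltnn _ sP. Qed.
Lemma uQ : uniq Q. Proof. exact: sorted_uniq ltn_trans ltnn _ sQ. Qed.
Lemma memP v : (v \in P) = (v \in y) && (v \notin x). Proof. by rewrite mem_filter andbC. Qed.
Lemma memQ v : (v \in Q) = (v \in x) && (v \notin y). Proof. by rewrite mem_filter andbC. Qed.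

Lemma cnt_rel i : cnt y i + cnt Q i = cnt x i + cnt P i.
Proof.
have e1 : cnt y i = count (fun v => (v <= i) && (v \in x)) y +
                    count (fun v => (v <= i) && ~~ (v \in x)) y.
  exact: (count_split _ (fun v => v \in x)).
have e2 : cnt x i = count (fun v => (v <= i) && (v \in y)) x +
                    count (fun v => (v <= i) && ~~ (v \in y)) x.
  exact: (count_split _ (fun v => v \in y)).
have e3 : cnt P i = count (fun v => (v <= i) && ~~ (v \in x)) y.
  by rewrite /cnt /P count_filter; apply: eq_count.
have e4 : cnt Q i = count (fun v => (v <= i) && ~~ (v \in y)) x.
  by rewrite /cnt /Q count_filter; apply: eq_count.
have e5 := count_sym (fun v => v <= i) uy ux.
rewrite e1 e2 e3 e4 e5; lia.
Qed.

Definition k := size Q.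

Lemma szP : size P = k.+1.
Proof.
have := cnt_rel M; rewrite !cnt_full ?mx ?my //; last first.
- by apply/allP => v; rewrite memQ => /andP[/rx /andP[]].
- by apply/allP => v; rewrite memP => /andP[/ry /andP[]].
rewrite szx szy /k => /= ?; lia.
Qed.

Lemma VPQ i : cnt Q i <= cnt P i <= (cnt Q i).+1.
Proof. have := interl_V i sx sy hI; have := cnt_rel i; lia. Qed.

Lemma evPQ i : (cnt x i < cnt y i) = (cnt Q i < cnt P i).
Proof. have := cnt_rel i; lia. Qed.

Lemma A1 j : j < k -> nth 0 P j < nth 0 Q j.
Proof.
move=> hj; have hjP : j < size P by rewrite szP; lia.
have hne : nth 0 P j != nth 0 Q j.
  apply/eqP => e; have := mem_nth 0 hjP; have := mem_nth 0 hj.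
  by rewrite e memP memQ => /andP[hx1 _] /andP[_]; rewrite hx1.
rewrite ltn_neqAle hne /= leqNgt; apply/negP => h.
have h1 := cnt_nth (nth 0 Q j) sQ hj; rewrite leqnn in h1.
have h2 := cnt_nth (nth 0 Q j) sP hjP.
have := VPQ (nth 0 Q j); move: h h1 h2; lia.
Qed.

Lemma A2 j : j < k -> nth 0 Q j < nth 0 P j.+1.
Proof.
move=> hj; have hjP : j.+1 < size P by rewrite szP; lia.
have hne : nth 0 P j.+1 != nth 0 Q j.
  apply/eqP => e; have := mem_nth 0 hjP; have := mem_nth 0 hj.
  by rewrite e memP memQ => /andP[hx1 _] /andP[_]; rewrite hx1.
rewrite ltn_neqAle eq_sym hne /= leqNgt; apply/negP => h.
have h1 := cnt_nth (nth 0 P j.+1) sP hjP; rewrite leqnn in h1.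
have h2 := cnt_nth (nth 0 P j.+1) sQ hj.
have := VPQ (nth 0 P j.+1); move: h h1 h2; lia.
Qed.

Lemma P0 : 0 < nth 0 P 0.
Proof. have : 0 < size P by rewrite szP. move/(mem_nth 0); rewrite memP => /andP[/ry /andP[]]//. Qed.

Lemma PM j : j < size P -> nth 0 P j <= M.
Proof. move/(mem_nth 0); rewrite memP => /andP[/ry /andP[]]//. Qed.

Definition r m := if odd m then nth 0 P m./2
  else if m./2 == 0 then 0 else if m./2 == k.+1 then M.+1 else nth 0 Q (m./2).-1.

Lemma rO j : r (j.*2).+1 = nth 0 P j.
Proof. rewrite /r /= odd_double /=; congr nth; lia. Qed.
Lemma rE j : r j.*2 = if j == 0 then 0 else if j == k.+1 then M.+1 else nth 0 Q j.-1.
Proof. by rewrite /r odd_double doubleK. Qed.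

Lemma rinc m : m < (k.+1).*2 -> r m < r m.+1.
Proof.
move=> hm; case: (parity m) hm => -[j ->] hm.
- rewrite rO rE; case: eqP => [-> | hj0]; first exact: P0.
  rewrite ifF; last by apply/eqP; lia.
  have := A2 (_ : j.-1 < k); have -> : j.-1.+1 = j by lia. apply; lia.
- rewrite rO -doubleS rE /=; case: eqP => [[->] | hj].
    by rewrite ltnS PM // szP.
  apply: A1; lia.
Qed.

Lemma rmono a b : a <= b <= (k.+1).*2 -> r a <= r b.
Proof. exact: mono_le rinc a b. Qed.

Lemma r0 : r 0 = 0. Proof. by []. Qed.
Lemma rend : r (k.+1).*2 = M.+1. Proof. by rewrite rE /= eqxx. Qed.

Lemma cntPQ m i : m < (k.+1).*2 -> r m <= i < r m.+1 ->
  cnt P i = (m.+1)./2 /\ cnt Q i = m./2.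
Proof.
move=> hm /andP[h1 h2].
have hk : m./2 <= k by lia.
split.
- apply: cnt_eq sP _ _ _; first by rewrite szP; lia.
  + move=> hn; rewrite -rO; apply: leq_trans h1; apply: rmono; lia.
  + move=> hn; rewrite -rO; apply: leq_trans h2 _; apply: rmono; rewrite szP in hn; lia.
- apply: cnt_eq sQ _ _ _; first by exact: hk.
  + move=> hn; have e : nth 0 Q (m./2).-1 = r (m./2).*2.
      rewrite rE ifF; last by apply/eqP; lia.
      by rewrite ifF //; apply/eqP; lia.
    rewrite e; apply: leq_trans h1; apply: rmono; lia.
  + move=> hn; have e : nth 0 Q m./2 = r (m./2).+1.*2.
      rewrite rE /= ifF //; apply/eqP; move: hn; rewrite -/k => ?; lia.
    rewrite e; apply: leq_trans h2 _; apply: rmono; move: hn; rewrite -/k; lia.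
Qed.


Lemma cnt_pred s i : uniq s -> (0 < i)%N -> cnt s i = (cnt s i.-1 + (i \in s))%N.
Proof. by move=> us hi; have := cnt_succ i.-1 us; rewrite prednK. Qed.

Lemma half_lt m : (m./2 < m.+1./2) = odd m.
Proof.
case: (parity m) => -[j ->].
- rewrite odd_double; apply/negbTE; rewrite -leqNgt; lia.
- rewrite /= odd_double /=; lia.
Qed.

Lemma ev_r m i : m < (k.+1).*2 -> r m <= i < r m.+1 -> ev x y i = odd m.
Proof. by move=> hm hi; rewrite /ev evPQ; case: (cntPQ hm hi) => -> ->; apply: half_lt. Qed.

Lemma pjE j : pj y x j.+1 = r (j.*2).+1. Proof. by rewrite /pj eP rO. Qed.
Lemma qjE j : qj M y x j = r j.*2. Proof. by rewrite /qj eQ rE. Qed.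

Section Prod.
Local Open Scope ring_scope.
Variable R : fieldType.
Variable w : bool -> bool -> bool -> bool -> R.

Lemma Fw_int m i : (m < (k.+1).*2)%N -> (r m < i < r m.+1)%N ->
  Fw w x y i = if odd m then (if i \in x then w true true true true else w true true false false)
               else (if i \in x then w false false true true else w false false false false).
Proof.
move=> hm /andP[h1 h2].
have hi0 : (0 < i)%N by lia.
have ha : (r m <= i.-1 < r m.+1)%N by lia.
have hb : (r m <= i < r m.+1)%N by lia.
have [c1 d1] := cntPQ hm ha; have [c2 d2] := cntPQ hm hb.
have hP : (i \in P) = false.
  apply/negbTE/negP => hiP; have := cnt_pred uP hi0; rewrite hiP c1 c2 /=; lia.
have hQ : (i \in Q) = false.
  apply/negbTE/negP => hiQ; have := cnt_pred uQ hi0; rewrite hiQ d1 d2 /=; lia.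
have exy : (i \in y) = (i \in x).
  by move: hP hQ; rewrite memP memQ; case: (i \in x); case: (i \in y).
rewrite /Fw exy (ev_r hm ha) (ev_r hm hb).
by case: (odd m); case: (i \in x).
Qed.

Lemma Fw_r m : (0 < m)%N -> (m < (k.+1).*2)%N ->
  Fw w x y (r m) = if odd m then w false true false true else w true false true false.
Proof.
case: m => // m _ hm.
have hm' : (m < (k.+1).*2)%N by lia.
have hlt := rinc hm'.
have hlt2 := rinc hm.
set i := r m.+1 in hlt hlt2 *.
have hi0 : (0 < i)%N by lia.
have ha : (r m <= i.-1 < r m.+1)%N by rewrite -/i; lia.
have hb : (r m.+1 <= i < r m.+2)%N by rewrite -/i; lia.
have [c1 d1] := cntPQ hm' ha; have [c2 d2] := cntPQ hm hb.
have eP' := cnt_pred uP hi0; have eQ' := cnt_pred uQ hi0.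
rewrite c1 c2 in eP'; rewrite d1 d2 in eQ'.
have e1 : ev x y i.-1 = odd m by rewrite (ev_r hm' ha).
have e2 : ev x y i = odd m.+1 by rewrite (ev_r hm hb).
rewrite /Fw e1 e2.
case: (parity m) eP' eQ' => -[j em]; rewrite em => eP' eQ'.
- have hP : i \in P by move: eP'; case: (i \in P) => //=; lia.
  have hQ : (i \in Q) = false by move: eQ'; case: (i \in Q) => //=; lia.
  move: hP; rewrite memP => /andP[-> /negbTE ->].
  by rewrite /= odd_double.
- have hP : (i \in P) = false by move: eP'; case: (i \in P) => //=; lia.
  have hQ : i \in Q by move: eQ'; case: (i \in Q) => //=; lia.
  move: hQ; rewrite memQ => /andP[-> /negbTE ->].
  by rewrite /= odd_double.
Qed.


Lemma prod_sites : \prod_(1 <= i < M.+1) Fw w x y i =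
  w false true false true ^+ k.+1 * w true false true false ^+ k *
  prodform M y x (w true true true true) (w true true false false)
                 (w false false true true) (w false false false false).
Proof.
have hinc : forall m, (m < (k.*2).+2)%N -> (r m < r m.+1)%N.
  by move=> m hm; apply: rinc; rewrite doubleS.
have T := @tele R (Fw w x y) r (k.*2).+1 hinc.
rewrite r0 -doubleS rend in T; rewrite T; clear T.
rewrite [X in _ * X](eq_big_nat _ _ (F2 := fun m => if odd m then w false true false true else w true false true false)); last first.
  by move=> m /andP[h1 h2]; apply: Fw_r.
rewrite powodd.
rewrite [X in X * _](eq_big_nat _ _ (F2 := fun m => \prod_((r m).+1 <= i < r m.+1)
   (if odd m then (if i \in x then w true true true true else w true true false false)
    else (if i \in x then w false false true true else w false false false false)))); last first.
  move=> m /andP[_ hm]; apply: eq_big_nat => i /andP[h1 h2].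
  by apply: Fw_int => //; apply/andP; split.
rewrite pairing mulrC; congr (_ * _).
rewrite /prodform big_add1 /= eQ -/k.
apply: eq_big_nat => j /andP[_ hj].
rewrite pjE !qjE /= odd_double /=.
have h0 : (r j.*2 < r (j.*2).+1)%N by apply: rinc; lia.
have h1 : (r (j.*2).+1 < r (j.*2).+2)%N by apply: rinc; lia.
rewrite !prod_if ?ux // doubleS.
ring.
Qed.

End Prod.

End Comb.

Module FM.

Theorem gen (R : fieldType) (w : bool -> bool -> bool -> bool -> R)
  (hw : forall ep en bx by_ : bool, (ep + by_ != en + bx)%N -> w ep en bx by_ = 0%R)
  M N x y (hx : site_seq M N x) (hy : site_seq M N.+1 y) :
  gmono w (fun i => i \in x) (fun i => i \in y) M true false =
  if interlace y x then
    (w false true false true ^+ (size (qseq y x)).+1 * w true false true false ^+ size (qseq y x) *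
    prodform M y x (w true true true true) (w true true false false)
                   (w false false true true) (w false false false false))%R
  else 0%R.
Proof.
rewrite (gmono_path hw M true (ux hx) (uy hy) (px hx) (py hy)).
have evM : ev x y M = true.
  by rewrite /ev (cnt_full (mx hx)) (cnt_full (my hy)) (szx hx) (szy hy) ltnSn.
rewrite evM andbT.
have hV : Vk x y M = interlace y x.
  apply/idP/idP.
  - move=> /allP hV; apply: (V_interl (M:=M)) (sx hx) (sy hy) _ (mx hx) (my hy) _.
      by rewrite (szx hx) (szy hy).
    by move=> i hi; apply: hV; rewrite mem_iota; lia.
  - by move=> hI; apply/allP => i _; exact: (interl_V i (sx hx) (sy hy) hI).
rewrite hV; case hI: (interlace y x) => //.
rewrite (eQ hx hy hI); have := prod_sites hx hy hI w; rewrite /k => ->; reflexivity.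
Qed.

End FM.
Import FM.
Module GM.
Local Open Scope ring_scope.

Lemma bridge (R : fieldType) (t a b c d e f u : R) (g : bool) (out inn X Y : nat -> bool)
  (w : bool -> bool -> bool -> bool -> R) :
  (forall k aout s, Lel t a b c d e f u aout (out k) s (inn k) = w (g (+) s) (g (+) aout) (X k) (Y k)) ->
  forall k aout ain, mono t a b c d e f u k aout ain out inn = gmono w X Y k (g (+) aout) (g (+) ain).
Proof.
move=> hL; elim=> [|k IH] aout ain.
  by case: (g) (aout) (ain) => -[] [].
cbn [mono gmono]; rewrite !big_bool !hL !IH.
by case: (g) => /=; rewrite ?negbK // addrC.
Qed.

Section Inst.
Variables (R : fieldType) (t a b c d e f u : R).
Definition w1 (ep en bx by_ : bool) := Lel t a b c d e f u (~~ en) by_ (~~ ep) bx.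
Definition w2 (ep en bx by_ : bool) := Lel t a b c d e f u (~~ en) (~~ bx) (~~ ep) (~~ by_).
Definition w3 (ep en bx by_ : bool) := Lel t a b c d e f u en bx ep by_.
Definition w4 (ep en bx by_ : bool) := Lel t a b c d e f u en (~~ by_) ep (~~ bx).

Lemma hw1 (ep en bx by_ : bool) : (ep + by_ != en + bx)%N -> w1 ep en bx by_ = 0.
Proof. by case: ep; case: en; case: bx; case: by_. Qed.
Lemma hw2 (ep en bx by_ : bool) : (ep + by_ != en + bx)%N -> w2 ep en bx by_ = 0.
Proof. by case: ep; case: en; case: bx; case: by_. Qed.
Lemma hw3 (ep en bx by_ : bool) : (ep + by_ != en + bx)%N -> w3 ep en bx by_ = 0.
Proof. by case: ep; case: en; case: bx; case: by_. Qed.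
Lemma hw4 (ep en bx by_ : bool) : (ep + by_ != en + bx)%N -> w4 ep en bx by_ = 0.
Proof. by case: ep; case: en; case: bx; case: by_. Qed.
End Inst.

Theorem main_all (R : fieldType) (t a b c d e f : R) (M N : nat)
  (x y xb yb : seq nat)
  (hx : site_seq M N x) (hy : site_seq M N.+1 y)
  (hxb : site_seq M N xb) (hyb : site_seq M N.+1 yb) (u : R) :
  [/\ Bel t a b c d e f u M (part_occ y) (part_occ x) = Gf t a b c d e f M y x u,
      Bel t a b c d e f u M (hole_occ xb) (hole_occ yb) = Hf t a b c d e f M yb xb u,
      Cel t a b c d e f u M (part_occ x) (part_occ y) = Gbarf t a b c d e f M y x u &
      Cel t a b c d e f u M (hole_occ yb) (hole_occ xb) = Hbarf t a b c d e f M yb xb u].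
Proof.
split.
- rewrite /Bel (@bridge _ t a b c d e f u true _ _ (fun i => i \in x) (fun i => i \in y) (w1 t a b c d e f u)); last first.
    by move=> k aout s; rewrite /w1 /= !negbK.
  by rewrite /= (gen (@hw1 _ t a b c d e f u) hx hy).
- rewrite /Bel (@bridge _ t a b c d e f u true _ _ (fun i => i \in xb) (fun i => i \in yb) (w2 t a b c d e f u)); last first.
    by move=> k aout s; rewrite /w2 /= !negbK.
  by rewrite /= (gen (@hw2 _ t a b c d e f u) hxb hyb).
- rewrite /Cel (@bridge _ t a b c d e f u false _ _ (fun i => i \in x) (fun i => i \in y) (w3 t a b c d e f u)); last first.
    by [].
  by rewrite /= (gen (@hw3 _ t a b c d e f u) hx hy).
- rewrite /Cel (@bridge _ t a b c d e f u false _ _ (fun i => i \in xb) (fun i => i \in yb) (w4 t a b c d e f u)); last first.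
    by [].
  by rewrite /= (gen (@hw4 _ t a b c d e f u) hxb hyb).
Qed.

End GM.
Import GM.

Unset Implicit Arguments. Set Strict Implicit. Set Printing Implicit Defensive.
Local Open Scope ring_scope.

Theorem mainTheorem13 (R : fieldType) (t a b c d e f : R)
  (ha : a != 0) (hb : b != 0) (hc : c != 0) (hd : d != 0) (he : e != 0) (hf : f != 0)
  (ht : t != 0) (ht1 : t != 1)
  (h1 : c * d + a * f = 0) (h2 : t * c * d + b * e = 0)
  (M N : nat) (hN : (N <= M - 1)%N) (hM : (1 <= M)%N)
  (x y xb yb : seq nat)
  (hx : site_seq M N x) (hy : site_seq M N.+1 y)
  (hxb : site_seq M N xb) (hyb : site_seq M N.+1 yb) (u : R) :
  [/\ Bel t a b c d e f u M (part_occ y) (part_occ x) = Gf t a b c d e f M y x u,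
      Bel t a b c d e f u M (hole_occ xb) (hole_occ yb) = Hf t a b c d e f M yb xb u,
      Cel t a b c d e f u M (part_occ x) (part_occ y) = Gbarf t a b c d e f M y x u &
      Cel t a b c d e f u M (hole_occ yb) (hole_occ xb) = Hbarf t a b c d e f M yb xb u].
Proof. exact: (@main_all R t a b c d e f M N x y xb yb hx hy hxb hyb u). Qed.
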